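(* Suppose $n_0>0$ and consider an orbit of the system in the interior of the cube that converges as $\lambda\to+\infty$ to $P_2=(U,Q,\Omega)=(0,1,0)$. Then the limits $$C=\lim_{\lambda\to\infty}\frac{\Omega^{1/a}}{1-Q},\qquad D=\lim_{\lambda\to\infty}\frac{\Omega^{n_0/a}}{U}$$ exist and are positive and finite, and the corresponding perfect fluid solution has finite radius $R$ and total mass $M$ given by $$R^2=\frac{1}{4\pi\rho_-}\frac{C}{D},\qquad M^2=\frac{1}{4\pi\rho_-}\frac{C^3}{D}.$$ Moreover near the surface, with $\delta r=(R-r)/R$, the Newtonian potential satisfies $v(r)=-C\delta r-C\delta r^2+v_S+O(\delta r^{2+\min(1,n_0)})$.
   Context: Equation of state: $\rho=\rho(p)$ with $\rho>0$ for $p>0$, $\eta(p)=\int_0^p dp'/\rho(p')$ finite; index function $n(\eta)=\frac{\eta}{\rho}\frac{d\rho}{d\eta}$; asymptotically polytropic with $\rho(\eta)=\rho_-\eta^{n_0}(1+O(\eta^{a_0}))$ as $\eta\to0$ ($\rho_->0$, $a_0>0$). Perfect fluid: $dm/dr=4\pi r^2\rho$, $dp/dr=-m\rho/r^2$; Newtonian potential $v$ with $v=v_S-\eta$, $v_S$ the surface potential. Variables $U=u/(1+u)$, $Q=q/(1+q)$, $\Omega=\eta^a/(1+\eta^a)$ with $u=4\pi r^3\rho/m$, $q=m/(r\eta)$, $a>0$, obeying $\frac{dU}{d\lambda}=U(1-U)[(1-Q)(3-4U)-n(\Omega)Q(1-U)]$, $\frac{dQ}{d\lambda}=Q(1-Q)[(2U-1)(1-Q)+Q(1-U)]$,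 $\frac{d\Omega}{d\lambda}=-a\Omega(1-\Omega)Q(1-U)$, $d\lambda/d\ln r=(1-U)^{-1}(1-Q)^{-1}$. *)

(* Defs.v *)
From Stdlib Require Import Reals.
From Coquelicot Require Import Coquelicot.
Open Scope R_scope.

(* The equation of state is encoded by the density as a function of the
   enthalpy-like variable eta.  *)

Definition index_fun (rho : R -> R) (eta : R) : R :=
  eta * Derive rho eta / rho eta.

(* eta as a function of Omega = eta^a/(1+eta^a) *)
Definition eta_of_Om (a Om : R) : R := Rpower (Om / (1 - Om)) (1 / a).

Definition n_Om (rho : R -> R) (a Om : R) : R := index_fun rho (eta_of_Om a Om).

(* Asymptotically polytropic: rho(eta) = rho_- eta^n0 (1 + O(eta^a0)) as
   eta -> 0, with the O-term differentiable in the usual sense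
   (eta * d/deta O(eta^a0) = O(eta^a0)), equivalently n(eta) = n0 + O(eta^a0). *)
Definition asympt_polytropic (rho : R -> R) (rhom n0 a0 : R) : Prop :=
  exists K delta, 0 < delta /\
    forall eta, 0 < eta < delta ->
      Rabs (rho eta / (rhom * Rpower eta n0) - 1) <= K * Rpower eta a0 /\
      Rabs (index_fun rho eta - n0) <= K * Rpower eta a0.

(* Reconstruction of the perfect fluid solution from (U,Q,Omega):
   u = U/(1-U), q = Q/(1-Q), eta = (Omega/(1-Omega))^(1/a),
   u q = 4 pi r^2 rho / eta  gives r,  and m = q r eta. *)
Definition u_of (U : R) : R := U / (1 - U).
Definition q_of (Q : R) : R := Q / (1 - Q).

Definition radius_of (rho : R -> R) (a U Q Om : R) : R :=
  let eta := eta_of_Om a Om in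
  sqrt (u_of U * q_of Q * eta / (4 * PI * rho eta)).

Definition mass_of (rho : R -> R) (a U Q Om : R) : R :=
  q_of Q * radius_of rho a U Q Om * eta_of_Om a Om.

Definition potential_of (vS a Om : R) : R := vS - eta_of_Om a Om.

(* Main.v *)
Require Import Defs.
From Stdlib Require Import Reals Lra.
From Coquelicot Require Import Coquelicot.
Open Scope R_scope.

Ltac rw_der f l H :=
  match type of H with is_derive _ _ ?v =>
  replace (Derive (fun x : R => f x) l) with v by (symmetry; apply is_derive_unique; exact H) end.

Lemma der_cont f x d : is_derive f x d -> continuity_pt f x.
Proof.
  intro H. apply is_derive_Reals in H.
  apply (derivable_continuous_pt f x (exist _ d H)).
Qed.

Lemma mono_up (f df : R -> R) L :
  (forall x, L <= x -> is_derive f x (df x)) ->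
  (forall x, L <= x -> 0 <= df x) ->
  forall x y, L <= x -> x <= y -> f x <= f y.
Proof.
  intros Hd Hp x y Hx Hxy.
  destruct (MVT_gen f x y df) as [c [Hc Heq]].
  - intros z Hz. apply Hd. rewrite Rmin_left in Hz; lra.
  - intros z Hz. apply (der_cont f z (df z)). apply Hd.
    rewrite Rmin_left in Hz; lra.
  - rewrite Rmin_left in Hc by lra. rewrite Rmax_right in Hc by lra.
    assert (0 <= df c) by (apply Hp; lra).
    assert (0 <= df c * (y - x)) by (apply Rmult_le_pos; lra). lra.
Qed.

Lemma mono_down (f df : R -> R) L :
  (forall x, L <= x -> is_derive f x (df x)) ->
  (forall x, L <= x -> df x <= 0) ->
  forall x y, L <= x -> x <= y -> f y <= f x.
Proof.
  intros Hd Hp x y Hx Hxy.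
  assert (H := mono_up (fun z => - f z) (fun z => - df z) L).
  assert (- f x <= - f y); [|lra].
  apply H; auto.
  - intros z Hz. apply (is_derive_opp f z (df z)). auto.
  - intros z Hz. specialize (Hp z Hz). lra.
Qed.

Lemma strict_up (f df : R -> R) :
  (forall x, is_derive f x (df x)) ->
  (forall x, 0 < df x) ->
  forall x y, x < y -> f x < f y.
Proof.
  intros Hd Hp x y Hxy.
  destruct (MVT_gen f x y df) as [c [Hc Heq]].
  - intros z Hz. apply Hd.
  - intros z Hz. apply (der_cont f z (df z)). apply Hd.
  - assert (0 < df c * (y - x)) by (apply Rmult_lt_0_compat; [apply Hp|lra]). lra.
Qed.

Lemma lim_spec f (l : R) :
  is_lim f p_infty l <-> forall eps, 0 < eps -> exists M, forall x, M < x -> Rabs (f x - l) < eps.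
Proof.
  rewrite <- is_lim_spec. split.
  - intros H eps Heps. destruct (H (mkposreal eps Heps)) as [M HM]. exists M. exact HM.
  - intros H eps. destruct (H eps (cond_pos eps)) as [M HM]. exists M. exact HM.
Qed.

Lemma ev_lt f (l c : R) : is_lim f p_infty l -> l < c -> exists M, forall x, M < x -> f x < c.
Proof.
  intros H Hc. rewrite lim_spec in H. destruct (H (c - l)) as [M HM]; [lra|].
  exists M. intros x Hx. specialize (HM x Hx). apply Rabs_def2 in HM. lra.
Qed.

Lemma ev_gt f (l c : R) : is_lim f p_infty l -> c < l -> exists M, forall x, M < x -> c < f x.
Proof.
  intros H Hc. rewrite lim_spec in H. destruct (H (l - c)) as [M HM]; [lra|].
  exists M. intros x Hx. specialize (HM x Hx). apply Rabs_def2 in HM. lra.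
Qed.

Lemma mono_lim (f : R -> R) L B :
  (forall x y, L <= x -> x <= y -> f x <= f y) ->
  (forall x, L <= x -> f x <= B) ->
  exists l : R, is_lim f p_infty l /\ forall x, L <= x -> f x <= l.
Proof.
  intros Hm Hb.
  set (E := fun y => exists x, L <= x /\ y = f x).
  assert (HE : bound E) by (exists B; intros y [x [Hx ->]]; auto).
  assert (HE2 : exists y, E y) by (exists (f L); exists L; split; [lra|auto]).
  destruct (completeness E HE HE2) as [l [Hu Hl]].
  assert (Hle : forall x, L <= x -> f x <= l) by (intros x Hx; apply Hu; exists x; auto).
  exists l; split; auto.
  apply lim_spec. intros eps Heps.
  destruct (Classical_Prop.classic (exists x, L <= x /\ l - eps < f x)) as [[x0 [Hx0 Hf0]]|Hn].
  - exists x0. intros x Hx. assert (f x0 <= f x) by (apply Hm; lra).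
    assert (f x <= l) by (apply Hle; lra).
    apply Rabs_def1; lra.
  - exfalso. assert (l <= l - eps); [|lra].
    apply Hl. intros y [x [Hx ->]].
    destruct (Rle_dec (f x) (l - eps)); auto.
    exfalso; apply Hn; exists x; split; auto; lra.
Qed.

Lemma up_le_lim (f : R -> R) L (l : R) :
  (forall x y, L <= x -> x <= y -> f x <= f y) -> is_lim f p_infty l ->
  forall x, L <= x -> f x <= l.
Proof.
  intros Hm Hl x Hx.
  destruct (Rle_dec (f x) l) as [|Hn]; auto. exfalso.
  destruct (ev_lt f l (f x) Hl) as [M HM]; [lra|].
  specialize (HM (Rmax M x + 1) ltac:(unfold Rmax; destruct Rle_dec; lra)).
  assert (f x <= f (Rmax M x + 1)) by (apply Hm; auto; unfold Rmax; destruct Rle_dec; lra).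
  lra.
Qed.

Lemma down_ge_lim (f : R -> R) L (l : R) :
  (forall x y, L <= x -> x <= y -> f y <= f x) -> is_lim f p_infty l ->
  forall x, L <= x -> l <= f x.
Proof.
  intros Hm Hl x Hx.
  assert (H := up_le_lim (fun z => - f z) L (- l)).
  assert (- f x <= - l); [|lra]. apply H; auto.
  - intros a b Ha Hb. specialize (Hm a b Ha Hb). lra.
  - apply (is_lim_opp f p_infty l) in Hl. exact Hl.
Qed.

Lemma lim_mult f g (a b : R) : is_lim f p_infty a -> is_lim g p_infty b ->
  is_lim (fun x => f x * g x) p_infty (a * b).
Proof.
  intros Ha Hb. apply (is_lim_mult f g p_infty a b Ha Hb). simpl; auto.
Qed.

Lemma lim_div f g (a b : R) : is_lim f p_infty a -> is_lim g p_infty b -> b <> 0 ->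
  is_lim (fun x => f x / g x) p_infty (a / b).
Proof.
  intros Ha Hb Hn. apply (is_lim_div f g p_infty a b Ha Hb).
  - intro H. injection H. auto.
  - simpl; auto.
Qed.

Lemma lim_ext_ev f g (l : R) M : (forall x, M < x -> f x = g x) -> is_lim f p_infty l -> is_lim g p_infty l.
Proof.
  intros He H. apply (is_lim_ext_loc f g p_infty l); auto. exists M; auto.
Qed.

Lemma lim_cont f (g : R -> R) (l : R) : is_lim f p_infty l -> continuity_pt g l ->
  is_lim (fun x => g (f x)) p_infty (g l).
Proof.
  intros H Hc. apply (is_lim_comp_continuous f g p_infty l H).
  apply continuity_pt_filterlim. exact Hc.
Qed.

Lemma rpow_small x p e : 0 < p -> 0 < e -> 0 < x -> x < Rpower e (/ p) -> Rpower x p < e.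
Proof.
  intros Hp He Hx Hxe.
  assert (H := Rlt_Rpower_l x (Rpower e (/ p)) p Hp (conj Hx Hxe)).
  rewrite Rpower_mult in H. rewrite Rinv_l in H by lra. rewrite Rpower_1 in H; auto.
Qed.

Lemma lim_rpow0 f p M : 0 < p -> (forall x, M < x -> 0 < f x) -> is_lim f p_infty 0 ->
  is_lim (fun x => Rpower (f x) p) p_infty 0.
Proof.
  intros Hp Hpos Hl. rewrite lim_spec in *. intros eps Heps.
  assert (0 < Rpower eps (/ p)) by (unfold Rpower; apply exp_pos).
  destruct (Hl _ H) as [M1 HM1]. exists (Rmax M M1). intros x Hx.
  assert (M < x /\ M1 < x) as [h1 h2] by (unfold Rmax in Hx; destruct Rle_dec; lra).
  specialize (HM1 x h2). specialize (Hpos x h1).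
  rewrite Rminus_0_r in *. rewrite Rabs_pos_eq in HM1 by lra.
  assert (0 < Rpower (f x) p) by (unfold Rpower; apply exp_pos).
  rewrite Rabs_pos_eq by lra. apply rpow_small; auto.
Qed.

Lemma exp_le' x y : x <= y -> exp x <= exp y.
Proof. intro H. destruct (Rle_lt_or_eq_dec _ _ H) as [h| <-]; [left; apply exp_increasing; auto|lra]. Qed.

Lemma rpow_dec x p q : 0 < x <= 1 -> p <= q -> Rpower x q <= Rpower x p.
Proof.
  intros Hx Hpq. unfold Rpower. apply exp_le'.
  assert (ln x <= 0).
  { destruct (Rle_lt_or_eq_dec _ _ (proj2 Hx)) as [h| ->].
    - rewrite <- ln_1. left. apply ln_increasing; lra.
    - rewrite ln_1; lra. }
  nra.
Qed.

Lemma rpow_pos x p : 0 < Rpower x p.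
Proof. apply exp_pos. Qed.

Lemma rpow_one_base p : Rpower 1 p = 1.
Proof. unfold Rpower. rewrite ln_1, Rmult_0_r. apply exp_0. Qed.

Lemma deriv_rpow (g : R -> R) x dg p : 0 < g x -> is_derive g x dg ->
  is_derive (fun y => Rpower (g y) p) x (p * Rpower (g x) (p - 1) * dg).
Proof.
  intros Hp Hg.
  assert (H1 : is_derive (fun z => Rpower z p) (g x) (p * Rpower (g x) (p - 1))).
  { apply is_derive_Reals. apply derivable_pt_lim_power; auto. }
  assert (H := is_derive_comp (fun z => Rpower z p) g x _ _ H1 Hg).
  replace (p * Rpower (g x) (p - 1) * dg) with (scal dg (p * Rpower (g x) (p - 1))).
  exact H. unfold scal; simpl; unfold mult; simpl. ring.
Qed.

Lemma der_eq (f : R -> R) (x d d' : R) : is_derive f x d -> d = d' -> is_derive f x d'.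
Proof. intros H <-; exact H. Qed.

Lemma lim_le_ev f (l : R) eps : is_lim f p_infty l -> 0 < eps ->
  exists M, forall x, M < x -> l - eps < f x < l + eps.
Proof.
  intros H He. rewrite lim_spec in H. destruct (H eps He) as [M HM].
  exists M. intros x Hx. specialize (HM x Hx). apply Rabs_def2 in HM. lra.
Qed.

Lemma lim_plus f g (a b : R) : is_lim f p_infty a -> is_lim g p_infty b ->
  is_lim (fun x => f x + g x) p_infty (a + b).
Proof. intros Ha Hb. apply (is_lim_plus f g p_infty a b (a+b) Ha Hb). reflexivity. Qed.

Lemma lim_minus f g (a b : R) : is_lim f p_infty a -> is_lim g p_infty b ->
  is_lim (fun x => f x - g x) p_infty (a - b).
Proof. intros Ha Hb. apply (is_lim_minus f g p_infty a b (a-b) Ha Hb). reflexivity. Qed.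

Lemma lim_c (c : R) : is_lim (fun _ => c) p_infty c.
Proof. apply is_lim_const. Qed.

Lemma lim_val f (a b : R) : is_lim f p_infty a -> a = b -> is_lim f p_infty b.
Proof. intros H <-; exact H. Qed.

Lemma der_plus (f g : R -> R) x a b : is_derive f x a -> is_derive g x b ->
  is_derive (fun y => f y + g y) x (a + b).
Proof. intros H1 H2. exact (is_derive_plus f g x a b H1 H2). Qed.

Lemma der_scal c (f : R -> R) x a : is_derive f x a ->
  is_derive (fun y => c * f y) x (c * a).
Proof. intros H. exact (is_derive_scal f x c a H). Qed.

Definition etaF a (Om : R -> R) l := eta_of_Om a (Om l).
Definition SF rho a (U Q Om : R -> R) l :=
  u_of (U l) * q_of (Q l) * etaF a Om l / (4 * PI * rho (etaF a Om l)).
Definition rF rho a (U Q Om : R -> R) l := radius_of rho a (U l) (Q l) (Om l).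
Definition mF rho a (U Q Om : R -> R) l := mass_of rho a (U l) (Q l) (Om l).

Lemma rF_eq rho a U Q Om l : rF rho a U Q Om l = sqrt (SF rho a U Q Om l).
Proof. reflexivity. Qed.
Lemma mF_eq rho a U Q Om l : mF rho a U Q Om l = q_of (Q l) * rF rho a U Q Om l * etaF a Om l.
Proof. reflexivity. Qed.

Lemma eta_pos a Om l : 0 < Om l < 1 -> 0 < etaF a Om l.
Proof. intros. unfold etaF, eta_of_Om, Rpower. apply exp_pos. Qed.

Lemma deriv_eta (a : R) (U Q Om : R -> R) (Ha : 0 < a)
  (Hinterior : forall l, (0 < U l < 1) /\ (0 < Q l < 1) /\ (0 < Om l < 1))
  (HOm : forall l, is_derive Om l (- a * Om l * (1 - Om l) * Q l * (1 - U l))) l :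
  is_derive (etaF a Om) l (- etaF a Om l * Q l * (1 - U l)).
Proof.
  destruct (Hinterior l) as [[U0 U1] [[Q0 Q1] [O0 O1]]].
  unfold etaF, eta_of_Om, Rpower.
  auto_derive.
  - repeat split; try (eexists; apply HOm); try lra.
    apply Rdiv_lt_0_compat; lra.
  - rw_der Om l (HOm l).
    unfold Rdiv. set (E := exp _).
    field. lra.
Qed.

Lemma deriv_S (A B E P : R -> R) l dA dB dE dP
  (HA : is_derive A l dA) (HB : is_derive B l dB) (HE : is_derive E l dE) (HP : is_derive P l dP)
  (hA : 0 < A l < 1) (hB : 0 < B l < 1) (hE : 0 < E l) (hP : 0 < P l) :
  is_derive (fun l => u_of (A l) * q_of (B l) * E l / (4 * PI * P l)) l
   (u_of (A l) * q_of (B l) * E l / (4 * PI * P l) *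
     (dA / (A l * (1 - A l)) + dB / (B l * (1 - B l)) + dE / E l - dP / P l)).
Proof.
  unfold u_of, q_of.
  assert (PI > 0) by apply PI_RGT_0.
  auto_derive.
  - repeat split; try (eexists; eassumption); try lra.
    apply Rgt_not_eq; apply Rmult_gt_0_compat; lra.
  - rw_der A l HA. rw_der B l HB. rw_der E l HE. rw_der P l HP.
    field. repeat split; lra.
Qed.

Lemma deriv_rhoeta (rho eta : R -> R) l de (Hd : ex_derive rho (eta l)) (He : is_derive eta l de) :
  is_derive (fun l => rho (eta l)) l (de * Derive rho (eta l)).
Proof.
  apply (is_derive_comp rho eta l (Derive rho (eta l)) de).
  now apply Derive_correct. exact He.
Qed.

Lemma SF_pos rho a U Q Om l
  (Hrho_pos : forall eta, 0 < eta -> 0 < rho eta)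
  (Hi : (0 < U l < 1) /\ (0 < Q l < 1) /\ (0 < Om l < 1)) : 0 < SF rho a U Q Om l.
Proof.
  destruct Hi as [[U0 U1] [[Q0 Q1] [O0 O1]]].
  assert (He := eta_pos a Om l (conj O0 O1)).
  assert (Hr := Hrho_pos _ He). assert (PI > 0) by apply PI_RGT_0.
  unfold SF, u_of, q_of. apply Rdiv_lt_0_compat.
  - assert (0 < U l / (1 - U l)) by (apply Rdiv_lt_0_compat; lra).
    assert (0 < Q l / (1 - Q l)) by (apply Rdiv_lt_0_compat; lra).
    apply Rmult_lt_0_compat; [apply Rmult_lt_0_compat|]; assumption.
  - apply Rmult_lt_0_compat; [lra|exact Hr].
Qed.

Lemma deriv_SF rho a (U Q Om : R -> R) (Ha : 0 < a)
  (Hrho_pos : forall eta, 0 < eta -> 0 < rho eta)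
  (Hrho_diff : forall eta, 0 < eta -> ex_derive rho eta)
  (Hinterior : forall l, (0 < U l < 1) /\ (0 < Q l < 1) /\ (0 < Om l < 1))
  (HU : forall l, is_derive U l
          (U l * (1 - U l) * ((1 - Q l) * (3 - 4 * U l)
                              - n_Om rho a (Om l) * Q l * (1 - U l))))
  (HQ : forall l, is_derive Q l
          (Q l * (1 - Q l) * ((2 * U l - 1) * (1 - Q l) + Q l * (1 - U l))))
  (HOm : forall l, is_derive Om l
          (- a * Om l * (1 - Om l) * Q l * (1 - U l))) l :
  is_derive (SF rho a U Q Om) l (SF rho a U Q Om l * (2 * (1 - U l) * (1 - Q l))).
Proof.
  destruct (Hinterior l) as [[U0 U1] [[Q0 Q1] [O0 O1]]].
  assert (He := eta_pos a Om l (conj O0 O1)).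
  assert (Hr := Hrho_pos _ He).
  assert (HE := deriv_eta a U Q Om Ha Hinterior HOm l).
  assert (HP := deriv_rhoeta rho (etaF a Om) l _ (Hrho_diff _ He) HE).
  assert (H := deriv_S U Q (etaF a Om) (fun l => rho (etaF a Om l)) l _ _ _ _
     (HU l) (HQ l) HE HP (conj U0 U1) (conj Q0 Q1) He Hr).
  match type of H with is_derive _ _ ?d =>
    replace (SF rho a U Q Om l * (2 * (1 - U l) * (1 - Q l))) with d; [exact H|] end.
  unfold n_Om, index_fun. fold (etaF a Om l).
  change (eta_of_Om a (Om l)) with (etaF a Om l).
  unfold SF. set (e := etaF a Om l) in *. set (d := Derive rho e).
  unfold u_of, q_of. assert (PI > 0) by apply PI_RGT_0.
  field. repeat split; lra.
Qed.

Lemma deriv_r rho a (U Q Om : R -> R) (Ha : 0 < a)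
  (Hrho_pos : forall eta, 0 < eta -> 0 < rho eta)
  (Hrho_diff : forall eta, 0 < eta -> ex_derive rho eta)
  (Hinterior : forall l, (0 < U l < 1) /\ (0 < Q l < 1) /\ (0 < Om l < 1))
  (HU : forall l, is_derive U l
          (U l * (1 - U l) * ((1 - Q l) * (3 - 4 * U l)
                              - n_Om rho a (Om l) * Q l * (1 - U l))))
  (HQ : forall l, is_derive Q l
          (Q l * (1 - Q l) * ((2 * U l - 1) * (1 - Q l) + Q l * (1 - U l))))
  (HOm : forall l, is_derive Om l
          (- a * Om l * (1 - Om l) * Q l * (1 - U l))) l :
  is_derive (rF rho a U Q Om) l (rF rho a U Q Om l * (1 - U l) * (1 - Q l)).
Proof.
  assert (HS := deriv_SF rho a U Q Om Ha Hrho_pos Hrho_diff Hinterior HU HQ HOm l).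
  assert (Hp := SF_pos rho a U Q Om l Hrho_pos (Hinterior l)).
  assert (H := is_derive_sqrt _ _ _ HS Hp).
  match type of H with is_derive _ _ ?d =>
    replace (rF rho a U Q Om l * (1 - U l) * (1 - Q l)) with d; [exact H|] end.
  rewrite rF_eq.
  assert (Hq := sqrt_lt_R0 _ Hp).
  pattern (SF rho a U Q Om l) at 1. rewrite <- (sqrt_sqrt (SF rho a U Q Om l)) by lra.
  field. lra.
Qed.

Lemma rF_pos rho a U Q Om l
  (Hrho_pos : forall eta, 0 < eta -> 0 < rho eta)
  (Hi : (0 < U l < 1) /\ (0 < Q l < 1) /\ (0 < Om l < 1)) : 0 < rF rho a U Q Om l.
Proof. rewrite rF_eq. apply sqrt_lt_R0. apply SF_pos; auto. Qed.

Lemma mF_pos rho a U Q Om l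
  (Hrho_pos : forall eta, 0 < eta -> 0 < rho eta)
  (Hi : (0 < U l < 1) /\ (0 < Q l < 1) /\ (0 < Om l < 1)) : 0 < mF rho a U Q Om l.
Proof.
  rewrite mF_eq. assert (H1 := rF_pos rho a U Q Om l Hrho_pos Hi).
  destruct Hi as [[U0 U1] [[Q0 Q1] [O0 O1]]].
  assert (He := eta_pos a Om l (conj O0 O1)).
  assert (0 < q_of (Q l)) by (unfold q_of; apply Rdiv_lt_0_compat; lra).
  apply Rmult_lt_0_compat; [apply Rmult_lt_0_compat|]; assumption.
Qed.

Lemma deriv_m rho a (U Q Om : R -> R) (Ha : 0 < a)
  (Hrho_pos : forall eta, 0 < eta -> 0 < rho eta)
  (Hrho_diff : forall eta, 0 < eta -> ex_derive rho eta)
  (Hinterior : forall l, (0 < U l < 1) /\ (0 < Q l < 1) /\ (0 < Om l < 1))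
  (HU : forall l, is_derive U l
          (U l * (1 - U l) * ((1 - Q l) * (3 - 4 * U l)
                              - n_Om rho a (Om l) * Q l * (1 - U l))))
  (HQ : forall l, is_derive Q l
          (Q l * (1 - Q l) * ((2 * U l - 1) * (1 - Q l) + Q l * (1 - U l))))
  (HOm : forall l, is_derive Om l
          (- a * Om l * (1 - Om l) * Q l * (1 - U l))) l :
  is_derive (mF rho a U Q Om) l (mF rho a U Q Om l * U l * (1 - Q l)).
Proof.
  assert (Hr := deriv_r rho a U Q Om Ha Hrho_pos Hrho_diff Hinterior HU HQ HOm l).
  assert (HE := deriv_eta a U Q Om Ha Hinterior HOm l).
  destruct (Hinterior l) as [[U0 U1] [[Q0 Q1] [O0 O1]]].
  apply (is_derive_ext (fun l => q_of (Q l) * rF rho a U Q Om l * etaF a Om l)).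
  { intro t. reflexivity. }
  unfold q_of. auto_derive.
  - repeat split; try (eexists; eassumption); try (eexists; apply HQ); try lra.
  - rw_der Q l (HQ l). rw_der (rF rho a U Q Om) l Hr. rw_der (etaF a Om) l HE.
    rewrite mF_eq. unfold q_of. field. lra.
Qed.

Lemma ident1 rho a U Q Om l
  (Hrho_pos : forall eta, 0 < eta -> 0 < rho eta)
  (Hi : (0 < U l < 1) /\ (0 < Q l < 1) /\ (0 < Om l < 1)) :
  etaF a Om l * Q l = mF rho a U Q Om l * (1 - Q l) / rF rho a U Q Om l.
Proof.
  assert (H1 := rF_pos rho a U Q Om l Hrho_pos Hi).
  destruct Hi as [[U0 U1] [[Q0 Q1] [O0 O1]]].
  rewrite mF_eq. unfold q_of. field. lra.
Qed.

Lemma ident2 rho a U Q Om l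
  (Hrho_pos : forall eta, 0 < eta -> 0 < rho eta)
  (Hi : (0 < U l < 1) /\ (0 < Q l < 1) /\ (0 < Om l < 1)) :
  U l = (1 - U l) * (4 * PI * rF rho a U Q Om l ^ 3 * rho (etaF a Om l) / mF rho a U Q Om l).
Proof.
  assert (H1 := SF_pos rho a U Q Om l Hrho_pos Hi).
  assert (H2 := mF_pos rho a U Q Om l Hrho_pos Hi).
  destruct Hi as [[U0 U1] [[Q0 Q1] [O0 O1]]].
  assert (He := eta_pos a Om l (conj O0 O1)).
  assert (Hr := Hrho_pos _ He). assert (PI > 0) by apply PI_RGT_0.
  rewrite mF_eq in *. rewrite rF_eq in *.
  assert (Hs : sqrt (SF rho a U Q Om l) ^ 3 = SF rho a U Q Om l * sqrt (SF rho a U Q Om l)).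
  { simpl. rewrite Rmult_1_r. rewrite <- Rmult_assoc. rewrite sqrt_sqrt by lra. ring. }
  rewrite Hs. unfold SF in *. unfold q_of, u_of in *.
  assert (0 < sqrt (U l / (1 - U l) * (Q l / (1 - Q l)) * etaF a Om l / (4 * PI * rho (etaF a Om l)))) by (apply sqrt_lt_R0; auto).
  field. repeat split; try lra.
Qed.

Lemma aux_ineq U Q : 0 < U < 1/10 -> 9/10 < Q < 1 ->
  1 <= 2 * Q * ((2*U-1)*(1-Q) + Q*(1-U)).
Proof.
  intros. assert (h1 : (2*U-1)*(1-Q) >= -(1/10)) by nra.
  assert (h2 : Q*(1-U) >= 81/100) by nra.
  assert (h3 : (2*U-1)*(1-Q) + Q*(1-U) >= 71/100) by lra.
  nra.
Qed.

Lemma conv_gen (U Q f g : R -> R) L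
  (Hi : forall x, 0 < U x < 1 /\ 0 < Q x < 1)
  (HQ : forall l, is_derive Q l
          (Q l * (1 - Q l) * ((2 * U l - 1) * (1 - Q l) + Q l * (1 - U l))))
  (Df : forall x, is_derive f x (f x * g x))
  (fpos : forall x, 0 < f x)
  (gb : forall x, 0 <= g x <= 1 - Q x)
  (HL : forall x, L <= x -> U x < 1/10 /\ 9/10 < Q x) :
  (forall x y, x <= y -> f x <= f y) /\
  exists l : R, is_lim f p_infty l /\ (forall x, L <= x -> f x <= l).
Proof.
  assert (up : forall x y, x <= y -> f x <= f y).
  { intros x y Hxy. destruct (Rle_dec (Rmin x y - 1) x).
    apply (mono_up f (fun z => f z * g z) (Rmin x y - 1)); auto.
    intros z _. specialize (fpos z). specialize (gb z). apply Rmult_le_pos; lra.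
    unfold Rmin in *; destruct Rle_dec; lra. }
  split; auto.
  assert (bd : forall x, L <= x -> ln (f x) + 2*(1-Q x) <= ln (f L) + 2*(1-Q L)).
  { intros x Hx.
    apply (mono_down (fun x => ln (f x) + 2*(1-Q x))
      (fun x => g x - 2 * (Q x * (1 - Q x) * ((2 * U x - 1) * (1 - Q x) + Q x * (1 - U x)))) L);
     [| |lra|lra].
    - intros z _. specialize (fpos z). auto_derive.
      + repeat split; try (eexists; apply HQ); try (eexists; apply Df); try lra.
      + rw_der f z (Df z). rw_der Q z (HQ z). field. lra.
    - intros z Hz. destruct (HL z Hz). destruct (Hi z) as [[? ?] [? ?]].
      specialize (gb z).
      assert (Hq2 := aux_ineq (U z) (Q z) ltac:(lra) ltac:(lra)).
      assert (0 < 1 - Q z) by lra.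
      assert (1 * (1 - Q z) <= 2 * Q z * ((2*U z-1)*(1-Q z) + Q z*(1-U z)) * (1 - Q z))
        by (apply Rmult_le_compat_r; lra).
      nra. }
  apply (mono_lim f L (exp (ln (f L) + 2))).
  - intros; apply up; auto.
  - intros x Hx. specialize (bd x Hx). rewrite <- (exp_ln (f x)) by auto.
    apply exp_le'. destruct (Hi L) as [_ [? ?]]. destruct (Hi x) as [_ [? ?]]. lra.
Qed.

Lemma potential_core (U Q eta r m : R -> R) (Rr M n0 K0 L L0 : R)
  (Hn0 : 0 < n0)
  (Hi : forall x, 0 < U x < 1 /\ 0 < Q x < 1)
  (epos : forall x, 0 < eta x) (rpos : forall x, 0 < r x) (mpos : forall x, 0 < m x)
  (De : forall x, is_derive eta x (- eta x * Q x * (1 - U x)))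
  (Dr : forall x, is_derive r x (r x * (1 - U x) * (1 - Q x)))
  (Dm : forall x, is_derive m x (m x * U x * (1 - Q x)))
  (I1 : forall x, eta x * Q x = m x * (1 - Q x) / r x)
  (r_up : forall x y, x <= y -> r x <= r y)
  (m_up : forall x y, x <= y -> m x <= m y)
  (Hr : is_lim r p_infty Rr) (Hm : is_lim m p_infty M)
  (He : is_lim eta p_infty 0)
  (HUb : forall x, L0 <= x -> U x <= K0 * Rpower (eta x) n0)
  (HL : forall x, L <= x -> U x < 1/10) :
  exists K lam0, forall l, lam0 <= l ->
    Rabs (- eta l + (M / Rr) * ((Rr - r l) / Rr) + (M / Rr) * ((Rr - r l) / Rr) ^ 2)
      <= K * Rpower ((Rr - r l) / Rr) (2 + Rmin 1 n0).
Proof.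
  assert (rle : forall x, r x <= Rr) by (intro x; apply (up_le_lim r x); auto; lra).
  assert (mle : forall x, m x <= M) by (intro x; apply (up_le_lim m x); auto; lra).
  assert (Rpos : 0 < Rr) by (specialize (rle 0); specialize (rpos 0); lra).
  assert (Mpos : 0 < M) by (specialize (mle 0); specialize (mpos 0); lra).
  assert (I1' : forall x, eta x = m x * (1 - Q x) / (r x * Q x)).
  { intro x. destruct (Hi x) as [_ [? ?]]. specialize (I1 x). specialize (rpos x).
    apply (Rmult_eq_reg_r (Q x)); [|lra]. rewrite I1. field. lra. }
  assert (rlt : forall x, r x < Rr).
  { intro x. assert (r x < r (x+1)); [|specialize (rle (x+1)); lra].
    apply (strict_up r (fun x => r x * (1 - U x) * (1 - Q x))); auto; [|lra].
    intro z. destruct (Hi z) as [[? ?] [? ?]]. specialize (rpos z).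
    apply Rmult_lt_0_compat; [apply Rmult_lt_0_compat|]; lra. }
  set (dr := fun x => (Rr - r x) / Rr).
  assert (drpos : forall x, 0 < dr x).
  { intro x. unfold dr. specialize (rlt x). apply Rdiv_lt_0_compat; lra. }
  assert (Ddr : forall x, is_derive dr x (- (r x * (1 - U x) * (1 - Q x)) / Rr)).
  { intro x. unfold dr. auto_derive.
    - eexists; apply Dr.
    - rw_der r x (Dr x). field. lra. }
  assert (Hdr : is_lim dr p_infty 0).
  { apply (lim_val _ ((Rr - Rr) / Rr)); [|field; lra].
    apply lim_div; [|apply lim_c|lra]. apply lim_minus; [apply lim_c|exact Hr]. }
  set (F := fun x => eta x - M / r x + M / Rr).
  assert (DF : forall x, is_derive F x ((1 - U x) * (1 - Q x) * (M - m x) / r x)).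
  { intro x. specialize (rpos x). unfold F. auto_derive.
    - repeat split; try (eexists; apply Dr); try (eexists; apply De); lra.
    - rw_der r x (Dr x). rw_der eta x (De x). rewrite (I1' x).
      destruct (Hi x) as [_ [? ?]]. field. lra. }
  assert (HF : is_lim F p_infty 0).
  { apply (lim_val _ (0 - M / Rr + M / Rr)); [|ring].
    apply lim_plus; [|apply lim_c]. apply lim_minus; [exact He|].
    apply lim_div; [apply lim_c|exact Hr|lra]. }
  assert (F_up : forall x y, x <= y -> F x <= F y).
  { intros x y Hxy. apply (mono_up F _ x (fun z _ => DF z)); auto; [|lra].
    intros z _. destruct (Hi z) as [[? ?] [? ?]]. specialize (rpos z). specialize (mle z).
    apply Rdiv_le_0_compat; [|lra]. apply Rmult_le_pos; [apply Rmult_le_pos|]; lra. }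
  assert (Fle : forall x, F x <= 0) by (intro x; apply (up_le_lim F x); auto; lra).
  set (B := Rmax L L0).
  set (r0 := r B).
  assert (r0pos : 0 < r0) by apply rpos.
  set (K2 := M / r0).
  assert (etab : forall x, B <= x -> eta x <= K2 * dr x).
  { intros x Hx. specialize (Fle x). unfold F in Fle. unfold K2, dr, r0.
    assert (r B <= r x) by (apply r_up; auto). assert (0 < r B) by apply rpos. specialize (rpos x). specialize (rlt x).
    assert (eta x <= M / r x - M / Rr) by lra.
    assert (M / r x - M / Rr = (M / r x) * ((Rr - r x) / Rr)) by (field; lra).
    assert (M / r x <= M / r B).
    { apply Rmult_le_compat_l; [lra|]. apply Rinv_le_contravar; lra. }
    assert (0 <= (Rr - r x) / Rr) by (apply Rdiv_le_0_compat; lra).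
    nra. }
  set (K1 := K0 * Rpower K2 n0).
  assert (Ub : forall x, B <= x -> U x <= K1 * Rpower (dr x) n0).
  { intros x Hx. assert (L0 <= x) by (unfold B, Rmax in Hx; destruct Rle_dec; lra).
    specialize (HUb x H). unfold K1. rewrite Rmult_assoc. rewrite Rpower_mult_distr.
    - assert (Rpower (eta x) n0 <= Rpower (K2 * dr x) n0).
      { apply Rle_Rpower_l; [lra|]. split; auto. }
      assert (0 <= K0).
      { destruct (Hi x) as [[? ?] _]. assert (0 < Rpower (eta x) n0) by apply rpow_pos.
        destruct (Rle_dec 0 K0); auto. nra. }
      nra.
    - unfold K2. apply Rdiv_lt_0_compat; lra.
    - auto. }
  assert (K1pos : 0 <= K1).
  { destruct (Hi B) as [[? ?] _]. specialize (Ub B (Rle_refl _)).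
    assert (0 < Rpower (dr B) n0) by apply rpow_pos.
    destruct (Rle_dec 0 K1); auto. nra. }
  set (K := 2 * M * K1 * Rr / ((1 + n0) * r0)).
  assert (Kpos : 0 <= K).
  { unfold K. apply Rdiv_le_0_compat; [|apply Rmult_lt_0_compat; lra].
    assert (0 <= 2 * M * K1) by (apply Rmult_le_pos; lra).
    apply Rmult_le_pos; lra. }
  set (G := fun x => m x + K * Rpower (dr x) (1 + n0)).
  assert (DG : forall x, is_derive G x
     (m x * U x * (1 - Q x) + K * ((1 + n0) * Rpower (dr x) (1 + n0 - 1) * (- (r x * (1 - U x) * (1 - Q x)) / Rr)))).
  { intro x. unfold G. apply der_plus; [apply Dm|].
    apply der_scal. apply deriv_rpow; auto. }
  assert (G_down : forall x y, B <= x -> x <= y -> G y <= G x).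
  { apply (mono_down G _ B (fun x _ => DG x)).
    intros x Hx. replace (1 + n0 - 1) with n0 by ring.
    destruct (Hi x) as [[? ?] [? ?]]. specialize (Ub x Hx). specialize (mle x).
    assert (HUL : U x < 1/10) by (apply HL; unfold B, Rmax in Hx; destruct Rle_dec; lra).
    assert (r0 <= r x) by (apply r_up; auto). specialize (mpos x).
    set (P := Rpower (dr x) n0) in *. assert (0 < P) by apply rpow_pos.
    assert (E : K * ((1 + n0) * P * (- (r x * (1 - U x) * (1 - Q x)) / Rr))
               = - (2 * M * K1 * P * (r x / r0) * (1 - U x) * (1 - Q x))).
    { unfold K. field. repeat split; lra. }
    rewrite E.
    assert (1 <= r x / r0) by (apply (Rmult_le_reg_r r0); [lra|]; field_simplify; lra).
    assert (m x * U x <= M * (K1 * P)).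
    { apply Rmult_le_compat; lra. }
    assert (0 <= M * K1 * P) by (apply Rmult_le_pos; [apply Rmult_le_pos|]; lra).
    assert (M * (K1 * P) <= 2 * M * K1 * P * (r x / r0) * (1 - U x)).
    { assert (2 * (r x / r0) * (1 - U x) >= 1) by nra. nra. }
    assert (0 < 1 - Q x) by lra. nra. }
  assert (HG : is_lim G p_infty M).
  { apply (lim_val _ (M + K * 0)); [|ring].
    apply lim_plus; auto. apply lim_mult; [apply lim_c|].
    apply (lim_rpow0 dr (1 + n0) 0); auto; lra. }
  assert (Mm : forall x, B <= x -> M - m x <= K * Rpower (dr x) (1 + n0)).
  { intros x Hx. assert (M <= G x) by (apply (down_ge_lim G B); auto). unfold G in H. lra. }
  set (K' := K * Rr / ((2 + n0) * r0 ^ 2)).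
  assert (K'pos : 0 <= K').
  { unfold K'. apply Rdiv_le_0_compat; [|apply Rmult_lt_0_compat; nra]. apply Rmult_le_pos; lra. }
  set (H := fun x => F x + K' * Rpower (dr x) (2 + n0)).
  assert (DH : forall x, is_derive H x
     ((1 - U x) * (1 - Q x) * (M - m x) / r x + K' * ((2 + n0) * Rpower (dr x) (2 + n0 - 1) * (- (r x * (1 - U x) * (1 - Q x)) / Rr)))).
  { intro x. unfold H. apply der_plus; [apply DF|].
    apply der_scal. apply deriv_rpow; auto. }
  assert (H_down : forall x y, B <= x -> x <= y -> H y <= H x).
  { apply (mono_down H _ B (fun x _ => DH x)).
    intros x Hx. replace (2 + n0 - 1) with (1 + n0) by ring.
    destruct (Hi x) as [[? ?] [? ?]]. specialize (Mm x Hx). specialize (mle x).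
    assert (r0 <= r x) by (apply r_up; auto). specialize (rpos x).
    set (P := Rpower (dr x) (1 + n0)) in *. assert (0 < P) by apply rpow_pos.
    assert (E : K' * ((2 + n0) * P * (- (r x * (1 - U x) * (1 - Q x)) / Rr))
               = - ((1 - U x) * (1 - Q x)) * (K * P * r x / r0 ^ 2)).
    { unfold K'. field. repeat split; lra. }
    rewrite E.
    assert (E2 : (1 - U x) * (1 - Q x) * (M - m x) / r x = (1 - U x) * (1 - Q x) * ((M - m x) / r x))
      by (field; lra).
    rewrite E2.
    assert ((M - m x) / r x <= K * P * r x / r0 ^ 2).
    { apply (Rmult_le_reg_r (r x)); [lra|].
      replace ((M - m x) / r x * r x) with (M - m x) by (field; lra).
      assert (r x * r x / r0 ^ 2 >= 1).
      { apply Rle_ge. apply (Rmult_le_reg_r (r0 ^ 2)); [nra|]. field_simplify; nra. }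
      assert (0 <= K * P) by (apply Rmult_le_pos; lra).
      replace (K * P * r x / r0 ^ 2 * r x) with ((K * P) * (r x * r x / r0 ^ 2)) by (field; lra).
      nra. }
    assert (0 < (1 - U x) * (1 - Q x)) by (apply Rmult_lt_0_compat; lra).
    nra. }
  assert (HH : is_lim H p_infty 0).
  { apply (lim_val _ (0 + K' * 0)); [|ring].
    apply lim_plus; auto. apply lim_mult; [apply lim_c|].
    apply (lim_rpow0 dr (2 + n0) 0); auto; lra. }
  assert (Fb : forall x, B <= x -> - F x <= K' * Rpower (dr x) (2 + n0)).
  { intros x Hx. assert (0 <= H x) by (apply (down_ge_lim H B); auto). unfold H in H0. lra. }
  destruct (ev_lt dr 0 (1/2) Hdr) as [L3 HL3]; [lra|].
  exists (K' + 2 * (M / Rr)), (Rmax B L3 + 1).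
  intros x Hx.
  assert (HB : B <= x) by (unfold Rmax in Hx; destruct Rle_dec; lra).
  assert (Hd2 : dr x < 1/2) by (apply HL3; unfold Rmax in Hx; destruct Rle_dec; lra).
  specialize (Fb x HB). specialize (Fle x). specialize (drpos x).
  change ((Rr - r x) / Rr) with (dr x).
  set (d := dr x) in *.
  assert (Hrx : r x = Rr * (1 - d)) by (unfold d, dr; field; lra).
  assert (Hex : eta x = F x + M / r x - M / Rr) by (unfold F; ring).
  assert (Eq : - eta x + M / Rr * d + M / Rr * d ^ 2 = - F x - (M / Rr) * (d ^ 3 / (1 - d))).
  { rewrite Hex, Hrx. field. split; lra. }
  rewrite Eq.
  assert (X1 : 0 <= (M / Rr) * (d ^ 3 / (1 - d))).
  { apply Rmult_le_pos; [apply Rdiv_le_0_compat; lra|]. apply Rdiv_le_0_compat; [|lra]. apply pow_le; lra. }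
  assert (X2 : (M / Rr) * (d ^ 3 / (1 - d)) <= 2 * (M / Rr) * Rpower d 3).
  { replace 3 with (INR 3) by (simpl; ring). rewrite Rpower_pow by lra.
    assert (0 < M / Rr) by (apply Rdiv_lt_0_compat; lra).
    assert (0 <= d ^ 3) by (apply pow_le; lra).
    assert (d ^ 3 / (1 - d) <= 2 * d ^ 3).
    { apply (Rmult_le_reg_r (1 - d)); [lra|]. field_simplify; [|lra]. nra. }
    nra. }
  assert (Y1 : Rpower d (2 + n0) <= Rpower d (2 + Rmin 1 n0)).
  { apply rpow_dec; [lra|]. assert (Rmin 1 n0 <= n0) by apply Rmin_r. lra. }
  assert (Y2 : Rpower d 3 <= Rpower d (2 + Rmin 1 n0)).
  { apply rpow_dec; [lra|]. assert (Rmin 1 n0 <= 1) by apply Rmin_l. lra. }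
  assert (0 < M / Rr) by (apply Rdiv_lt_0_compat; lra).
  assert (Z1 : K' * Rpower d (2 + n0) <= K' * Rpower d (2 + Rmin 1 n0)) by (apply Rmult_le_compat_l; lra).
  assert (Z2 : 2 * (M / Rr) * Rpower d 3 <= 2 * (M / Rr) * Rpower d (2 + Rmin 1 n0)) by (apply Rmult_le_compat_l; lra).
  assert (0 <= K' * Rpower d (2 + Rmin 1 n0)) by (apply Rmult_le_pos; [lra|left; apply rpow_pos]).
  apply Rabs_le. split; lra.
Qed.

Lemma lim_rpow_1m (Om : R -> R) p : is_lim Om p_infty 0 ->
  is_lim (fun x => Rpower (1 - Om x) p) p_infty 1.
Proof.
  intro H.
  assert (Hc : continuity_pt (fun y => Rpower (1 - y) p) 0).
  { apply (der_cont _ 0 (p * (-1 / (1 - 0)) * Rpower (1 - 0) p)).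
    unfold Rpower. auto_derive; [lra|]. rewrite Ropp_0, Rplus_0_r, Rminus_0_r. field. }


  assert (Hl := lim_cont Om (fun y => Rpower (1 - y) p) 0 H Hc).
  apply (lim_val _ _ _ Hl). rewrite Rminus_0_r. apply rpow_one_base.
Qed.

Theorem mainTheorem12
  (rho : R -> R) (rhom n0 a0 a : R)
  (Hn0 : 0 < n0) (Hrhom : 0 < rhom) (Ha0 : 0 < a0) (Ha : 0 < a)
  (Hrho_pos : forall eta, 0 < eta -> 0 < rho eta)
  (Hrho_diff : forall eta, 0 < eta -> ex_derive rho eta)
  (Hpoly : asympt_polytropic rho rhom n0 a0)
  (U Q Om : R -> R)
  (Hinterior : forall l, (0 < U l < 1) /\ (0 < Q l < 1) /\ (0 < Om l < 1))
  (HU : forall l, is_derive U l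
          (U l * (1 - U l) * ((1 - Q l) * (3 - 4 * U l)
                              - n_Om rho a (Om l) * Q l * (1 - U l))))
  (HQ : forall l, is_derive Q l
          (Q l * (1 - Q l) * ((2 * U l - 1) * (1 - Q l) + Q l * (1 - U l))))
  (HOm : forall l, is_derive Om l
          (- a * Om l * (1 - Om l) * Q l * (1 - U l)))
  (Hconv : is_lim U p_infty 0 /\ is_lim Q p_infty 1 /\ is_lim Om p_infty 0) :
  exists C D Rad M : R,
    0 < C /\ 0 < D /\
    is_lim (fun l => Rpower (Om l) (1 / a) / (1 - Q l)) p_infty C /\
    is_lim (fun l => Rpower (Om l) (n0 / a) / U l) p_infty D /\
    is_lim (fun l => radius_of rho a (U l) (Q l) (Om l)) p_infty Rad /\
    is_lim (fun l => mass_of rho a (U l) (Q l) (Om l)) p_infty M /\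
    Rad ^ 2 = 1 / (4 * PI * rhom) * (C / D) /\
    M ^ 2 = 1 / (4 * PI * rhom) * (C ^ 3 / D) /\
    forall vS : R,
      exists K lam0 : R, forall l, lam0 <= l ->
        let dr := (Rad - radius_of rho a (U l) (Q l) (Om l)) / Rad in
        Rabs (potential_of vS a (Om l) - (- C * dr - C * dr ^ 2 + vS))
          <= K * Rpower dr (2 + Rmin 1 n0).
Proof.
  destruct Hconv as [HlU [HlQ HlO]].
  assert (PIpos : 0 < PI) by apply PI_RGT_0.
  assert (Hi : forall x, 0 < U x < 1 /\ 0 < Q x < 1) by (intro x; destruct (Hinterior x) as [? [? ?]]; auto).
  assert (Dr := deriv_r rho a U Q Om Ha Hrho_pos Hrho_diff Hinterior HU HQ HOm).
  assert (Dm := deriv_m rho a U Q Om Ha Hrho_pos Hrho_diff Hinterior HU HQ HOm).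
  assert (De := deriv_eta a U Q Om Ha Hinterior HOm).
  assert (rpos : forall x, 0 < rF rho a U Q Om x) by (intro; apply rF_pos; auto).
  assert (mpos : forall x, 0 < mF rho a U Q Om x) by (intro; apply mF_pos; auto).
  assert (epos : forall x, 0 < etaF a Om x) by (intro x; apply eta_pos; apply Hinterior).
  assert (I1 : forall x, etaF a Om x * Q x = mF rho a U Q Om x * (1 - Q x) / rF rho a U Q Om x)
    by (intro; apply ident1; auto).
  assert (I2 : forall x, U x = (1 - U x) * (4 * PI * rF rho a U Q Om x ^ 3 * rho (etaF a Om x) / mF rho a U Q Om x))
    by (intro; apply ident2; auto).
  set (eta := etaF a Om) in *.
  set (r := rF rho a U Q Om) in *.
  set (m := mF rho a U Q Om) in *.
  assert (Heta_def : forall x, eta x = Rpower (Om x / (1 - Om x)) (1 / a)) by reflexivity.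
  assert (Heta_def' : forall x, eta x = eta_of_Om a (Om x)) by reflexivity.
  assert (Hr_def : forall x, r x = radius_of rho a (U x) (Q x) (Om x)) by reflexivity.
  assert (Hm_def : forall x, m x = mass_of rho a (U x) (Q x) (Om x)) by reflexivity.
  clearbody eta r m.
  destruct (ev_lt U 0 (1/10) HlU) as [L1 HL1]; [lra|].
  destruct (ev_gt Q 1 (9/10) HlQ) as [L2 HL2]; [lra|].
  set (L := Rmax L1 L2 + 1).
  assert (HL : forall x, L <= x -> U x < 1/10 /\ 9/10 < Q x).
  { intros x Hx. unfold L, Rmax in Hx. destruct Rle_dec; split; [apply HL1|apply HL2|apply HL1|apply HL2]; lra. }
  destruct (conv_gen U Q r (fun x => (1 - U x) * (1 - Q x)) L Hi HQ) as [r_up [Rr [Hr rle]]]; auto.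
  { intro x. eapply der_eq; [apply Dr|]. ring. }
  { intro x. destruct (Hi x) as [[? ?] [? ?]]. split; [apply Rmult_le_pos|]; nra. }
  destruct (conv_gen U Q m (fun x => U x * (1 - Q x)) L Hi HQ) as [m_up [M [Hm mle]]]; auto.
  { intro x. eapply der_eq; [apply Dm|]. ring. }
  { intro x. destruct (Hi x) as [[? ?] [? ?]]. split; [apply Rmult_le_pos|]; nra. }
  assert (Rpos : 0 < Rr) by (specialize (rle L (Rle_refl _)); specialize (rpos L); lra).
  assert (Mpos : 0 < M) by (specialize (mle L (Rle_refl _)); specialize (mpos L); lra).
  assert (Omp : forall x, 0 < Om x < 1) by (intro x; apply Hinterior).
  assert (He : is_lim eta p_infty 0).
  { apply (lim_ext_ev (fun x => Rpower (Om x / (1 - Om x)) (1/a)) eta 0 0); [intros; rewrite Heta_def; reflexivity|].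
    apply (lim_rpow0 _ (1/a) 0); [apply Rdiv_lt_0_compat; lra| |].
    - intros x _. specialize (Omp x). apply Rdiv_lt_0_compat; lra.
    - apply (lim_val _ (0 / (1 - 0))); [|unfold Rdiv; ring].
      apply lim_div; [exact HlO| apply lim_minus; [apply lim_c|exact HlO] | lra]. }
  set (rat := fun x => rho (eta x) / (rhom * Rpower (eta x) n0)).
  assert (Hrat : is_lim rat p_infty 1).
  { destruct Hpoly as [K [delta [Hdelta Hp]]].
    apply lim_spec. intros eps Heps.
    destruct (ev_lt eta 0 delta He) as [M1 HM1]; auto.
    assert (Hea := lim_rpow0 eta a0 0 Ha0 (fun x _ => epos x) He).
    assert (Ht : 0 < eps / (Rabs K + 1)) by (apply Rdiv_lt_0_compat; [lra|]; assert (0 <= Rabs K) by apply Rabs_pos; lra).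
    destruct (ev_lt _ 0 _ Hea Ht) as [M2 HM2].
    exists (Rmax M1 M2). intros x Hx.
    assert (M1 < x /\ M2 < x) as [hx1 hx2] by (unfold Rmax in Hx; destruct Rle_dec; lra).
    destruct (Hp (eta x)) as [h1 _]; [split; [apply epos|apply HM1; auto]|].
    unfold rat. specialize (HM2 x hx2).
    set (P := Rpower (eta x) a0) in *. assert (0 < P) by apply rpow_pos.
    assert (K * P <= Rabs K * P) by (apply Rmult_le_compat_r; [lra|apply Rle_abs]).
    assert (0 <= Rabs K) by apply Rabs_pos.
    assert (Rabs K * P <= Rabs K * (eps / (Rabs K + 1))) by (apply Rmult_le_compat_l; lra).
    assert (Rabs K * (eps / (Rabs K + 1)) < eps).
    { assert (E : Rabs K * (eps / (Rabs K + 1)) = eps - eps / (Rabs K + 1)) by (field; lra). lra. }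
    lra. }
  destruct (ev_lt rat 1 2 Hrat) as [L3 HL3]; [lra|].
  set (L0 := Rmax L L3 + 1).
  set (K0 := 4 * PI * Rr ^ 3 * (2 * rhom) / m L).
  assert (HUb : forall x, L0 <= x -> U x <= K0 * Rpower (eta x) n0).
  { intros x Hx.
    assert (L <= x /\ L3 < x) as [hx1 hx2] by (unfold L0, Rmax in Hx; destruct Rle_dec; lra).
    specialize (HL3 x hx2). unfold rat in HL3.
    set (P := Rpower (eta x) n0) in *. assert (0 < P) by apply rpow_pos.
    assert (hrho : 0 < rho (eta x)) by (apply Hrho_pos; auto).
    assert (hr2 : rho (eta x) <= 2 * rhom * P).
    { assert (rho (eta x) / (rhom * P) * (rhom * P) <= 2 * (rhom * P)).
      { apply Rmult_le_compat_r; [|lra]. apply Rmult_le_pos; lra. }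
      replace (rho (eta x) / (rhom * P) * (rhom * P)) with (rho (eta x)) in H0 by (field; split; lra).
      lra. }
    assert (hrx : r x <= Rr) by (apply rle; auto).
    assert (hmx : m L <= m x) by (apply m_up; auto).
    assert (0 < m L) by apply mpos. specialize (rpos x). specialize (mpos x).
    rewrite (I2 x).
    destruct (Hi x) as [[? ?] _].
    assert (hr3 : r x ^ 3 <= Rr ^ 3) by (apply pow_incr; lra).
    assert (0 < r x ^ 3) by (apply pow_lt; lra).
    assert (A1 : 4 * PI * r x ^ 3 * rho (eta x) <= 4 * PI * Rr ^ 3 * (2 * rhom * P)).
    { apply Rmult_le_compat; try lra.
      - apply Rmult_le_pos; lra.
      - apply Rmult_le_compat_l; lra. }
    assert (A2 : / m x <= / m L) by (apply Rinv_le_contravar; lra).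
    assert (A3 : 4 * PI * r x ^ 3 * rho (eta x) / m x <= 4 * PI * Rr ^ 3 * (2 * rhom * P) / m L).
    { unfold Rdiv. apply Rmult_le_compat; try lra.
      - apply Rmult_le_pos; [apply Rmult_le_pos|]; lra.
      - left. apply Rinv_0_lt_compat. lra. }
    assert (A4 : 0 <= 4 * PI * r x ^ 3 * rho (eta x) / m x).
    { apply Rdiv_le_0_compat; [|lra]. apply Rmult_le_pos; [apply Rmult_le_pos|]; lra. }
    replace (K0 * P) with (4 * PI * Rr ^ 3 * (2 * rhom * P) / m L) by (unfold K0; field; lra).
    nra. }
  assert (I1' : forall x, eta x = m x * (1 - Q x) / (r x * Q x)).
  { intro x. destruct (Hi x) as [_ [? ?]]. specialize (I1 x). specialize (rpos x).
    apply (Rmult_eq_reg_r (Q x)); [|lra]. rewrite I1. field. lra. }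
  assert (HC : is_lim (fun l => Rpower (Om l) (1 / a) / (1 - Q l)) p_infty (M / Rr)).
  { apply (lim_ext_ev (fun x => Rpower (1 - Om x) (1 / a) * (m x / (r x * Q x))) _ _ 0).
    - intros x _. specialize (Omp x). destruct (Hi x) as [_ [? ?]]. specialize (rpos x).
      replace (Om x) with ((Om x / (1 - Om x)) * (1 - Om x)) at 2 by (field; lra).
      rewrite <- Rpower_mult_distr; [|apply Rdiv_lt_0_compat; lra|lra].
      rewrite <- Heta_def. rewrite (I1' x). field. repeat split; lra.
    - apply (lim_val _ (1 * (M / (Rr * 1)))); [|field; lra].
      apply lim_mult; [apply lim_rpow_1m; exact HlO|].
      apply lim_div; [exact Hm| apply lim_mult; auto| lra]. }
  assert (HD : is_lim (fun l => Rpower (Om l) (n0 / a) / U l) p_infty (M / (4 * PI * Rr ^ 3 * rhom))).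
  { apply (lim_ext_ev (fun x => Rpower (1 - Om x) (n0 / a) *
        (m x / ((1 - U x) * (4 * PI * (r x * r x * r x)))) * (1 / (rhom * rat x))) _ _ 0).
    - intros x _. specialize (Omp x). destruct (Hi x) as [[? ?] [? ?]]. specialize (rpos x).
      specialize (mpos x). specialize (epos x).
      assert (hrho : 0 < rho (eta x)) by (apply Hrho_pos; auto).
      assert (hP : 0 < Rpower (eta x) n0) by apply rpow_pos.
      assert (hP2 : 0 < Rpower (1 - Om x) (n0 / a)) by apply rpow_pos.
      replace (Om x) with ((Om x / (1 - Om x)) * (1 - Om x)) at 2 by (field; lra).
      rewrite <- Rpower_mult_distr; [|apply Rdiv_lt_0_compat; lra|lra].
      replace (Rpower (Om x / (1 - Om x)) (n0 / a)) with (Rpower (eta x) n0)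
        by (rewrite Heta_def, Rpower_mult; f_equal; field; lra).
      rewrite (I2 x) at 2. unfold rat. field. repeat split; lra.
    - apply (lim_val _ (1 * (M / ((1 - 0) * (4 * PI * (Rr * Rr * Rr)))) * (1 / (rhom * 1)))); [|field; repeat split; lra].
      apply lim_mult; [apply lim_mult|].
      + apply lim_rpow_1m; exact HlO.
      + apply lim_div; [exact Hm| |].
        * apply lim_mult; [apply lim_minus; [apply lim_c|exact HlU]|].
          apply lim_mult; [apply lim_c|]. apply lim_mult; [apply lim_mult|]; auto.
        * assert (0 < Rr * Rr * Rr) by (repeat apply Rmult_lt_0_compat; lra).
          assert (0 < 4 * PI * (Rr * Rr * Rr)) by (apply Rmult_lt_0_compat; lra). nra.
      + apply lim_div; [apply lim_c| apply lim_mult; [apply lim_c|exact Hrat]| lra]. }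
  destruct (potential_core U Q eta r m Rr M n0 K0 L L0 Hn0 Hi epos rpos mpos De Dr Dm I1
     (fun x y h => r_up x y h) (fun x y h => m_up x y h) Hr Hm He HUb) as [K [lam0 HK]].
  { intros x Hx. apply HL; auto. }
  exists (M / Rr), (M / (4 * PI * Rr ^ 3 * rhom)), Rr, M.
  split; [apply Rdiv_lt_0_compat; lra|].
  split; [apply Rdiv_lt_0_compat; [lra|]; assert (0 < Rr ^ 3) by (apply pow_lt; lra);
          assert (0 < 4 * PI * Rr ^ 3) by (apply Rmult_lt_0_compat; lra);
          apply Rmult_lt_0_compat; lra|].
  split; [exact HC|]. split; [exact HD|].
  split; [apply (lim_ext_ev r _ _ 0); auto|].
  split; [apply (lim_ext_ev m _ _ 0); auto|].
  split; [field; repeat split; lra|].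
  split; [field; repeat split; lra|].
  intro vS. exists K, lam0. intros l Hl. cbv zeta.
  rewrite <- Hr_def. unfold potential_of. rewrite <- Heta_def'.
  replace (vS - eta l - (- (M / Rr) * ((Rr - r l) / Rr) - M / Rr * ((Rr - r l) / Rr) ^ 2 + vS))
    with (- eta l + (M / Rr) * ((Rr - r l) / Rr) + (M / Rr) * ((Rr - r l) / Rr) ^ 2) by ring.
  apply HK; auto.
Qed.
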